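(* Let $\mathbf{A}$ be an algebra and $B$ a subuniverse of $\mathbf{A}$. If $B$ absorbs $\mathbf{A}$, then $B$ Jónsson absorbs $\mathbf{A}$.
   Context: Absorption: a subuniverse $B$ of $\mathbf{A}$ absorbs $\mathbf{A}$ if there is an idempotent term $t$ of $\mathbf{A}$, say $n$-ary, such that $t(a_1,\dots,a_n)\in B$ whenever all but at most one of the $a_i$ lie in $B$ and the remaining one lies in $A$. Jónsson absorption: a subuniverse $B$ of $\mathbf{A}$ Jónsson absorbs $\mathbf{A}$ if there are ternary terms $d_0,\dots,d_n$ of $\mathbf{A}$ such that $d_i(b,a,b')\in B$ for all $i$, all $b,b'\in B$, $a\in A$; $d_i(x,y,y)=d_{i+1}(x,x,y)$ for all $i<n$ and all $x,y\in A$; $d_0(x,y,z)=x$ and $d_n(x,y,z)=z$ for all $x,y,z\in A$. *)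

(* Defs.v *)
From mathcomp Require Import all_boot.
Set Implicit Arguments. Unset Strict Implicit. Unset Printing Implicit Defensive.

Record signature := Signature { op_sym : Type; arity : op_sym -> nat }.

Record algebra (S : signature) := Algebra {
  carrier :> Type;
  interp : forall f : op_sym S, ('I_(arity f) -> carrier) -> carrier }.

Inductive term (S : signature) (V : Type) : Type :=
  | Var : V -> term S V
  | App : forall f : op_sym S, ('I_(arity f) -> term S V) -> term S V.

Fixpoint eval (S : signature) (A : algebra S) (V : Type) (env : V -> A)
  (t : term S V) : A :=
  match t with
  | Var v => env v
  | App f args => interp (fun i => eval env (args i))
  end.

Definition subuniverse (S : signature) (A : algebra S) (B : A -> Prop) : Prop :=
  forall (f : op_sym S) (a : 'I_(arity f) -> A),
    (forall i, B (a i)) -> B (interp a).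

Definition idempotent_term (S : signature) (A : algebra S) (n : nat)
  (t : term S 'I_n) : Prop :=
  forall x : A, eval (fun _ => x) t = x.

Definition absorbs (S : signature) (A : algebra S) (B : A -> Prop) : Prop :=
  exists (n : nat) (t : term S 'I_n),
    idempotent_term A t /\
    forall a : 'I_n -> A,
      (forall i j : 'I_n, ~ B (a i) -> ~ B (a j) -> i = j) ->
      B (eval a t).

Definition env3 (S : signature) (A : algebra S) (x y z : A) : 'I_3 -> A :=
  fun i => nth x [:: x; y; z] i.

Definition eval3 (S : signature) (A : algebra S) (t : term S 'I_3) (x y z : A) : A :=
  eval (env3 x y z) t.

Definition jonsson_absorbs (S : signature) (A : algebra S) (B : A -> Prop) : Prop :=
  exists (n : nat) (d : nat -> term S 'I_3),
    (forall i, i <= n -> forall (b b' a : A), B b -> B b' -> B (eval3 (d i) b a b')) /\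
    (forall i, i < n -> forall x y : A, eval3 (d i) x y y = eval3 (d i.+1) x x y) /\
    (forall x y z : A, eval3 (d 0) x y z = x) /\
    (forall x y z : A, eval3 (d n) x y z = z).

(* Main.v *)
From Stdlib Require Import FunctionalExtensionality.
Require Import Defs.
From mathcomp Require Import all_boot.
Set Implicit Arguments. Unset Strict Implicit.

Fixpoint tsubst (S : signature) (V W : Type) (s : V -> term S W) (t : term S V) : term S W :=
  match t with
  | Var v => s v
  | App f args => @App S W f (fun i => tsubst s (args i))
  end.


Lemma eval_ext (S : signature) (A : algebra S) (V : Type) (e1 e2 : V -> A) :
  (forall v, e1 v = e2 v) -> forall t, eval e1 t = eval e2 t.
Proof.
move=> H; fix IH 1 => t; case: t => [v|f args] /=; first exact: H.
congr (interp _); apply: functional_extensionality => i.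
exact: IH.
Qed.

Lemma eval_subst (S : signature) (A : algebra S) (V W : Type) (e : W -> A)
  (s : V -> term S W) : forall t, eval e (tsubst s t) = eval (fun v => eval e (s v)) t.
Proof.
fix IH 1 => t; case: t => [v|f args] //=.
congr (interp _); apply: functional_extensionality => i.
exact: IH.
Qed.

Definition sig3 (S : signature) (n j : nat) (p : 'I_n) : term S 'I_3 :=
  @Var S 'I_3 (if p < j then inord 2 else if val p == j then inord 1 else inord 0).

Definition DD (S : signature) (n : nat) (t : term S 'I_n) (k : nat) : term S 'I_3 :=
  if k == 0 then @Var S 'I_3 (inord 0)
  else if k <= n then tsubst (@sig3 S n k.-1) t else @Var S 'I_3 (inord 2).

Lemma env3_inord (S : signature) (A : algebra S) (x y z : A) k :
  k < 3 -> env3 x y z (inord k) = nth x [:: x; y; z] k.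
Proof. by move=> hk; rewrite /env3 inordK. Qed.

Lemma evalDD (S : signature) (A : algebra S) n (t : term S 'I_n) k (x y z : A) :
  0 < k <= n -> eval3 (DD t k) x y z =
  eval (fun p : 'I_n => if p < k.-1 then z else if val p == k.-1 then y else x) t.
Proof.
case/andP=> k0 kn; rewrite /eval3 /DD (negbTE (lt0n_neq0 k0)) kn eval_subst.
apply: eval_ext => p /=.
by case: ifP => _; [|case: ifP => _]; rewrite env3_inord.
Qed.

Theorem proposition2p2 (S : signature) (A : algebra S) (B : A -> Prop) :
  subuniverse B -> absorbs B -> jonsson_absorbs B.
Proof.
move=> _ [n [t [Hid Habs]]].
case: n t Hid Habs => [|n] t Hid Habs.
  have E : forall x y : A, x = y.
    move=> x y; rewrite -(Hid x) -(Hid y); apply: eval_ext; by case.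
  exists 0, (fun _ => @Var S 'I_3 (inord 0)); split; last split; last split.
  - move=> i _ b b' a Hb _; by rewrite /eval3 /= env3_inord.
  - by [].
  - by move=> x y z; rewrite /eval3 /= env3_inord.
  - by move=> x y z; rewrite /eval3 /= env3_inord.
exists n.+2, (DD t); split; last split; last split.
- move=> i hi b b' a Hb Hb'.
  case: (posnP i) => [->|i0]; first by rewrite /eval3 /DD /= env3_inord.
  case: (leqP i n.+1) => hin; last first.
    have -> : i = n.+2 by apply/eqP; rewrite eqn_leq hi hin.
    by rewrite /eval3 /DD /= ltnn /= env3_inord.
  rewrite evalDD ?i0 //; apply: Habs => p q.
  by case: ifP => _ // ; case: ifP => // /eqP hp _; case: ifP => _ //;
     case: ifP => // /eqP hq _; apply: val_inj; rewrite /= hp hq.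
- move=> i hi x y.
  case: (posnP i) => [->|i0].
    rewrite /eval3 /DD /= env3_inord // eval_subst /= -{1}(Hid x); apply: eval_ext => p.
    by rewrite /sig3 /=; case: ifP => _; rewrite env3_inord.
  have hi1 : i <= n.+1 by [].

  rewrite evalDD ?i0 //.
  case: (ltnP i n.+1) => hin.
    rewrite evalDD //; apply: eval_ext => p /=.
    case: (ltngtP p i.-1) => h.
    + by rewrite ifT //; apply: (leq_trans h); exact: leq_pred.
    + rewrite ifF; first by case: ifP.
      by apply/negbTE; rewrite -leqNgt -(prednK i0).
    + by rewrite ifT // h -(prednK i0) leqnn.
  have -> : i = n.+1 by apply/eqP; rewrite eqn_leq hin hi1.
  rewrite /eval3 /DD /= ltnn /= env3_inord // /=; transitivity (eval (fun _ : 'I_n.+1 => y) t); last exact: Hid.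
  apply: eval_ext => p /=.
  case: ifP => // /negbT; rewrite -leqNgt => h.
  by rewrite ifT //; rewrite eqn_leq h -ltnS ltn_ord.
- by move=> x y z; rewrite /eval3 /DD /= env3_inord.
- by move=> x y z; rewrite /eval3 /DD /= ltnn /= env3_inord.
Qed.
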